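(* For all $\alpha\in(0,\pi/2)$ and $\beta\in[0,\alpha]$, we have $r_0(\alpha,\beta)\le 1$. Moreover, $r_0(\alpha,\beta)\le 0$ if and only if $\alpha\le\pi/4$ and $\beta\le t(\alpha)$.
   Context: For $\alpha\in(0,\pi/2)$ and $\beta\in[0,\alpha]$, let $A=\frac{2\tan\beta}{\tan\alpha+\tan\beta}$, $B=2\cos(2\alpha)$, and $r_0(\alpha,\beta)=\frac{2A-B}{2-AB}$. Let $t(\alpha)=\arctan\!\left(\frac{\sin(3\alpha)-\sin\alpha}{3\cos\alpha-\cos(3\alpha)}\right)$. *)

(* Defs.v *)
From Stdlib Require Export Reals.
Open Scope R_scope.

Definition A_ab (a b : R) : R := 2 * tan b / (tan a + tan b).
Definition B_a (a : R) : R := 2 * cos (2 * a).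
Definition r0 (a b : R) : R :=
  (2 * A_ab a b - B_a a) / (2 - A_ab a b * B_a a).
Definition t_a (a : R) : R :=
  atan ((sin (3 * a) - sin a) / (3 * cos a - cos (3 * a))).

(* Main.v *)
Require Import Defs.
From Stdlib Require Import Reals Lra Psatz.
Open Scope R_scope.
Lemma alg (x y c : R) : 0 < x -> 0 <= y <= x -> 0 < c -> c*c*(1+x*x) = 1 ->
  let A := 2*y/(x+y) in let B := 2*(2*c*c-1) in
  (2*A-B)/(2-A*B) <= 1 /\
  ((2*A-B)/(2-A*B) <= 0 <-> (x <= 1 /\ y <= (2*x*c*(2*c*c-1))/(2*c*(3-2*c*c)))).
Proof.
  intros Hx Hy Hc Hcx A B.
  assert (HA0 : 0 <= A) by (unfold A; apply Rmult_le_pos; [lra| apply Rlt_le, Rinv_0_lt_compat; lra]).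
  assert (HA1 : A <= 1).
  { unfold A, Rdiv. apply (Rmult_le_reg_r (x+y)); [lra|].
    rewrite Rmult_assoc, Rinv_l by lra. lra. }
  assert (Hc1 : c*c < 1) by nra.
  assert (HB : -2 < B < 2) by (unfold B; nra).
  assert (Hden : 0 < 2 - A*B) by nra.
  assert (Hd : 0 < 2*c*(3-2*c*c)) by nra.
  split.
  - apply (Rmult_le_reg_r (2 - A*B)); [lra|].
    unfold Rdiv; rewrite Rmult_assoc, Rinv_l by lra. nra.
  - assert (E1 : (2*A-B)/(2-A*B) <= 0 <-> 2*A - B <= 0).
    { split; intro H.
      - destruct (Rle_dec (2*A-B) 0) as [h|h]; auto.
        exfalso. assert (0 < (2*A-B)/(2-A*B)) by (apply Rdiv_lt_0_compat; lra). lra.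
      - unfold Rdiv. assert (0 < /(2-A*B)) by (apply Rinv_0_lt_compat; lra). nra. }
    rewrite E1.
    assert (E2 : y <= (2*x*c*(2*c*c-1))/(2*c*(3-2*c*c)) <-> y*(2*c*(3-2*c*c)) <= 2*x*c*(2*c*c-1)).
    { split; intro H.
      - apply (Rmult_le_compat_r (2*c*(3-2*c*c))) in H; [|lra].
        assert (K : 2 * x * c * (2 * c * c - 1) / (2 * c * (3 - 2 * c * c)) * (2 * c * (3 - 2 * c * c)) = 2 * x * c * (2 * c * c - 1)) by (field; lra). lra.
      - apply (Rmult_le_reg_r (2*c*(3-2*c*c))); [lra|].
        assert (K : 2 * x * c * (2 * c * c - 1) / (2 * c * (3 - 2 * c * c)) * (2 * c * (3 - 2 * c * c)) = 2 * x * c * (2 * c * c - 1)) by (field; lra). lra. }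
    rewrite E2.
    assert (E3 : 2*A - B <= 0 <-> 4*y <= B*(x+y)).
    { unfold A, Rdiv. replace (2*(2*y*/(x+y))) with (4*y*/(x+y)) by ring.
      split; intro H.
      - apply (Rmult_le_reg_r (/(x+y))); [apply Rinv_0_lt_compat; lra|].
        rewrite (Rmult_assoc B), Rinv_r by lra. lra.
      - assert (0 < /(x+y)) by (apply Rinv_0_lt_compat; lra).
        assert (B = B*(x+y)*/(x+y)) by (field; lra). nra. }
    rewrite E3. unfold B.
    (* 4y <= 2(2cc-1)(x+y) <-> 2cy(3-2cc) <= 2xc(2cc-1), multiply by c *)
    split; intro H.
    + assert (Hxc : 2*c*c - 1 >= 0) by nra.
      split; [nra|nra].
    + destruct H as [H1 H2]. nra.
Qed.

Theorem lemma6 : forall a b : R,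
  0 < a < PI / 2 -> 0 <= b <= a ->
  r0 a b <= 1 /\ (r0 a b <= 0 <-> (a <= PI / 4 /\ b <= t_a a)).
Proof.
  intros a b Ha Hb.
  assert (HPI : 0 < PI) by apply PI_RGT_0.
  assert (Hc : 0 < cos a) by (apply cos_gt_0; lra).
  assert (Hs : 0 < sin a) by (apply sin_gt_0; lra).
  assert (Hsc : sin a * sin a + cos a * cos a = 1).
  { pose proof (sin2_cos2 a). unfold Rsqr in H. lra. }
  set (x := tan a). set (y := tan b). set (c := cos a).
  assert (Hxs : sin a = x * c) by (unfold x, c, tan; field; lra).
  assert (Hx : 0 < x) by (apply tan_gt_0; lra).
  assert (Hy0 : 0 <= y).
  { destruct (Req_dec b 0) as [->|h]. unfold y; rewrite tan_0; lra.
    apply Rlt_le, tan_gt_0; lra. }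
  assert (Hyx : y <= x).
  { destruct (Req_dec b a) as [->|h]. unfold y, x; lra.
    apply Rlt_le, tan_increasing; lra. }
  assert (Hcx : c*c*(1+x*x) = 1).
  { rewrite Hxs in Hsc. fold c in Hsc. nra. }
  assert (Hr : r0 a b = (2*(2*y/(x+y)) - 2*(2*c*c-1))/(2 - (2*y/(x+y))*(2*(2*c*c-1)))).
  { unfold r0, A_ab, B_a. rewrite cos_2a_cos. reflexivity. }
  assert (Ht : t_a a = atan ((2*x*c*(2*c*c-1))/(2*c*(3-2*c*c)))).
  { unfold t_a. f_equal.
    replace (3*a) with (2*a + a) by ring.
    rewrite sin_plus, cos_plus, sin_2a, cos_2a_cos. fold c. rewrite Hxs.
    f_equal; nra. }
  destruct (alg x y c Hx (conj Hy0 Hyx) Hc Hcx) as [H1 H2].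
  rewrite Hr, Ht. split; [exact H1|]. rewrite H2.
  set (R0 := 2 * x * c * (2 * c * c - 1) / (2 * c * (3 - 2 * c * c))).
  assert (E1 : a <= PI/4 <-> x <= 1).
  { split; intro H.
    - destruct (Req_dec a (PI/4)) as [->|h]. unfold x; rewrite tan_PI4; lra.
      rewrite <- tan_PI4. apply Rlt_le, tan_increasing; lra.
    - destruct (Rle_dec a (PI/4)) as [h|h]; auto.
      assert (tan (PI/4) < tan a) by (apply tan_increasing; lra).
      rewrite tan_PI4 in H0. fold x in H0. lra. }
  assert (E2 : b <= atan R0 <-> y <= R0).
  { assert (Hb' : atan y = b) by (unfold y; apply atan_tan; lra).
    split; intro H.
    - destruct (Rle_dec y R0) as [h|h]; auto.
      assert (atan R0 < atan y) by (apply atan_increasing; lra). lra.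
    - destruct (Req_dec y R0) as [e|e]. rewrite <- e; lra.
      assert (atan y < atan R0) by (apply atan_increasing; lra). lra. }
  rewrite E1, E2. tauto.
Qed.
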